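(* Let $\mathcal{M}$ be the set of compactly supported probability distributions on $\mathbb{R}$ (identified with their cdfs). A mapping $T:\mathcal{M}\to\mathcal{M}$ satisfies $T\circ T_d=T_d\circ T$ for every distortion function $d$ if and only if $T=T^u$ for some utility function $u$.
   Context: Increasing means non-decreasing. A distortion function is an increasing function $d:[0,1]\to[0,1]$ with $d(0)=0$ and $d(1)=1$ (not necessarily continuous). A utility function is an increasing continuous function $u:\mathbb{R}\to\mathbb{R}$. For a distortion function $d$, the probability distortion $T_d:\mathcal{M}\to\mathcal{M}$ is defined by $T_d(F)(x)=\lim_{y\downarrow x} d(F(y))$ for $x\in\mathbb{R}$. For a utility function $u$, the utility transform $T^u:\mathcal{M}\to\mathcal{M}$ maps the distribution of a random variable $X$ to the distribution of $u(X)$, i.e. $T^u(F)=F\circ u^{-1}$ with $F$ viewed as a measure. *)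

(* Defs.v *)
From HB Require Import structures.
From mathcomp Require Import all_boot all_order all_algebra.
From mathcomp Require Import all_classical all_reals all_analysis.
Set Implicit Arguments. Unset Strict Implicit. Unset Printing Implicit Defensive.
Import Order.TTheory GRing.Theory Num.Theory.
Import numFieldNormedType.Exports.
Local Open Scope classical_set_scope.
Local Open Scope ring_scope.

Definition inM (R : realType) (F : R -> R) : Prop :=
  {homo F : x y / x <= y} /\
  (forall x, F y @[y --> x^'+] --> F x) /\
  exists a b : R, (forall x, x < a -> F x = 0) /\ (forall x, b <= x -> F x = 1).

(* Distortion function d : [0,1] -> [0,1], nondecreasing, d 0 = 0, d 1 = 1
   (not necessarily continuous).  Represented as R -> R; values outside
   [0,1] are irrelevant. *)
Definition distortion (R : realType) (d : R -> R) : Prop :=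
  (forall x, 0 <= x <= 1 -> 0 <= d x <= 1) /\
  (forall x y, 0 <= x -> x <= y -> y <= 1 -> d x <= d y) /\
  d 0 = 0 /\ d 1 = 1.

Definition utility (R : realType) (u : R -> R) : Prop :=
  {homo u : x y / x <= y} /\ continuous u.

Definition Td (R : realType) (d : R -> R) (F : R -> R) : R -> R :=
  fun x => lim ((fun y => d (F y)) @ x^'+).

(* Measure assigned by the distribution with cdf F to a down-closed set
   D of R: it is sup_{t in D} F(t) (= F(s) if D = (-oo,s], = F(s-) if
   D = (-oo,s), = 1 if D = R, = 0 if D is empty, since sup set0 = 0). *)
Definition down_measure (R : realType) (F : R -> R) (D : set R) : R :=
  sup (F @` D).

(* Utility transform: T^u(F) = F o u^{-1}, the cdf of u(X) for X ~ F:
   T^u(F)(x) = P(u(X) <= x) = mu_F(u^{-1}((-oo, x])).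
   u^{-1}((-oo,x]) is down-closed since u is nondecreasing. *)
Definition Tu (R : realType) (u : R -> R) (F : R -> R) : R -> R :=
  fun x => down_measure F [set t | u t <= x].

(* Main.v *)
Require Import Defs.
From HB Require Import structures.
From mathcomp Require Import all_boot all_order all_algebra.
From mathcomp Require Import all_classical all_reals all_analysis.
From mathcomp Require Import lra.
Import Order.TTheory GRing.Theory Num.Theory.
Import numFieldNormedType.Exports Num.Def.
Local Open Scope classical_set_scope.
Local Open Scope ring_scope.
Set Implicit Arguments. Unset Strict Implicit.
Section S.
Variable R : realType.
Implicit Types (F G : R -> R) (x y p : R).

Lemma inM_bnd F : inM F -> forall x, 0 <= F x <= 1.
Proof.
case=> mF [_ [a [b [Ha Hb]]]] x; apply/andP; split.
  rewrite -(Ha (minr x (a - 1))); last by rewrite gt_min ltrBlDr ltrDl ltr01 orbT.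
  by apply: mF; rewrite ge_min lexx.
rewrite -(Hb (maxr x b)); last by rewrite le_max lexx orbT.
by apply: mF; rewrite le_max lexx.
Qed.

Lemma inf_char (A : set R) x : A !=set0 -> has_lbound A ->
  (forall s t, A s -> s <= t -> A t) ->
  (inf A <= x <-> forall y, x < y -> A y).
Proof.
move=> nA lA up; split.
  move=> hx y xy; have /(inf_lt nA) [z Az zy] : inf A < y by apply: le_lt_trans xy.
  by apply: up Az (ltW zy).
move=> H; rewrite leNgt; apply/negP => xi.
have Am : A ((x + inf A) / 2) by apply: H; lra.
have := ge_inf lA Am; lra.
Qed.

Lemma inf_eq (A : set R) c : (forall y, c < y -> A y) -> (forall y, A y -> c <= y) ->
  inf A = c.
Proof.
move=> H1 H2.
have nA : A !=set0 by exists (c + 1); apply: H1; lra.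
have lA : has_lbound A by exists c => y /H2.
apply/le_anti/andP; split; last exact: lb_le_inf.
rewrite leNgt; apply/negP => ci.
have Am : A ((c + inf A) / 2) by apply: H1; lra.
have := ge_inf lA Am; lra.
Qed.

Lemma itv_oo x y : ([set` `]x, +oo[] y) <-> x < y.
Proof. by rewrite /= in_itv /= andbT. Qed.

Lemma inf_img1 (g : R -> R) x : (forall y, x < y -> g y = 1) ->
  inf (g @` `]x, +oo[) = 1.
Proof.
move=> H.
have mem : (g @` `]x, +oo[) 1.
  by exists (x + 1); [apply/itv_oo; lra | apply: H; lra].
have lb : has_lbound (g @` `]x, +oo[) by exists 1 => _ [y /itv_oo /H -> <-].
apply/le_anti/andP; split; first exact: ge_inf lb _ mem.
by apply: lb_le_inf; [exists 1 | move=> _ [y /itv_oo /H -> <-]].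
Qed.

Lemma inf_img0 (g : R -> R) x : (forall y, x < y -> 0 <= g y) ->
  (exists2 y, x < y & g y = 0) -> inf (g @` `]x, +oo[) = 0.
Proof.
move=> H [y0 xy0 gy0].
have mem : (g @` `]x, +oo[) 0 by exists y0 => //; apply/itv_oo.
have lb : has_lbound (g @` `]x, +oo[) by exists 0 => _ [y /itv_oo /H ? <-].
apply/le_anti/andP; split; first exact: ge_inf lb _ mem.
by apply: lb_le_inf; [exists 0 | move=> _ [y /itv_oo /H ? <-]].
Qed.

Lemma lim_right_inf (g : R -> R) x : {homo g : s t / s <= t} ->
  (forall y, 0 <= g y) -> lim (g @ x^'+) = inf (g @` `]x, +oo[).
Proof.
move=> mg g0; apply: cvg_lim => //.
have h1 : {in `]x, +oo[ &, {homo g : s t / s <= t}} by move=> s t _ _; apply: mg.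
have h2 : has_lbound (g @` `]x, +oo[) by exists 0 => _ [y _ <-].
have h0 : (BRight x < BInfty R false)%O by [].
exact (@nondecreasing_at_right_cvgr R g x (BInfty R false) h0 h1 h2).
Qed.

Lemma Td_inf d G x : distortion d -> {homo G : s t / s <= t} ->
  (forall y, 0 <= G y <= 1) ->
  Td d G x = inf ((fun y => d (G y)) @` `]x, +oo[).
Proof.
move=> [d01 [dm _]] mG G01; rewrite /Td lim_right_inf //.
  move=> s t st; apply: dm; first by case/andP: (G01 s).
    exact: mG.
  by case/andP: (G01 t).
by move=> y; have /d01/andP[] := G01 y.
Qed.

End S.
Section S2.
Variable R : realType.
Implicit Types (F G : R -> R) (x y p q : R).

Definition stepge p (v : R) : R := if p <= v then 1 else 0.
Definition stepgt p (v : R) : R := if p < v then 1 else 0.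
Definition delta q (t : R) : R := if q <= t then 1 else 0.
Definition qlo G p := inf [set t | p <= G t].
Definition qhi G p := inf [set t | p < G t].

Lemma dist_stepge p : 0 < p <= 1 -> distortion (stepge p).
Proof.
case/andP=> p0 p1; rewrite /distortion /stepge; split.
  by move=> v _; case: ifP => _; rewrite ?lexx ?ler01.
split; last by rewrite leNgt p0 p1.
move=> s t _ st _; case: ifP => ps; last by case: ifP => _; rewrite ?ler01 ?lexx.
by rewrite (le_trans ps st).
Qed.

Lemma dist_stepgt p : 0 <= p < 1 -> distortion (stepgt p).
Proof.
case/andP=> p0 p1; rewrite /distortion /stepgt; split.
  by move=> v _; case: ifP => _; rewrite ?lexx ?ler01.
split; last by rewrite ltNge p0 p1.
move=> s t _ st _; case: ifP => ps; last by case: ifP => _; rewrite ?ler01 ?lexx.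
by rewrite (lt_le_trans ps st).
Qed.

Lemma delta_homo q : {homo delta q : s t / s <= t}.
Proof.
move=> s t st; rewrite /delta; case: ifP => qs; first by rewrite (le_trans qs st).
by case: ifP => _; rewrite ?ler01 ?lexx.
Qed.

Lemma delta01 q t : 0 <= delta q t <= 1.
Proof. by rewrite /delta; case: ifP => _; rewrite ?lexx ?ler01. Qed.

Lemma inM_delta q : inM (delta q).
Proof.
split; first exact: delta_homo.
split.
  move=> x; apply: cvg_near_cst; case: (lerP q x) => h.
    near=> y; rewrite /delta h ifT //; apply: le_trans h _; apply: ltW.
    by near: y; apply: nbhs_right_gt.
  near=> y; rewrite /delta ifF; last first.
    by apply/negbTE; rewrite -ltNge; near: y; apply: nbhs_right_lt.
  by rewrite ifF //; apply/negbTE; rewrite -ltNge.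
exists q, q; split=> t ht; rewrite /delta; last by rewrite ht.
by rewrite ifF //; apply/negbTE; rewrite -ltNge.
Unshelve. all: by end_near.
Qed.

Lemma delta_inj a b : delta a = delta b -> a = b.
Proof.
move=> e.
have ha : delta b a = 1 by rewrite -e /delta lexx.
have hb : delta a b = 1 by rewrite e /delta lexx.
move: ha hb; rewrite /delta; case: ifP => ba; case: ifP => ab.
- by move=> _ _; apply/le_anti; rewrite ab ba.
all: by move=> h1 h2; lra.
Qed.

Lemma inf_wit (A : set R) x : has_lbound A -> x < inf A ->
  exists2 y, x < y & ~ A y.
Proof.
move=> lA xi; exists ((x + inf A) / 2); first lra.
move=> Am; have := ge_inf lA Am; lra.
Qed.

Lemma Td_delta d q : distortion d -> Td d (delta q) = delta q.
Proof.
move=> dd; have [d01 [dm [d0 d1]]] := dd.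
apply/funext => x; rewrite Td_inf //; [|exact: delta_homo|exact: delta01].
case: (lerP q x) => h.
  rewrite /delta h; apply: inf_img1 => y xy.
  by rewrite ifT ?d1 //; apply: le_trans h (ltW xy).
rewrite /delta ifF; last by apply/negbTE; rewrite -ltNge.
apply: inf_img0.
  by move=> y _; case: ifP => _; rewrite ?d0 ?d1 ?lexx ?ler01.
exists ((x + q) / 2); first lra.
by rewrite ifF ?d0 //; apply/negbTE; rewrite -ltNge; lra.
Qed.

Section Quant.
Variable G : R -> R.
Hypothesis hG : inM G.

Lemma qlo_char p x : 0 < p <= 1 ->
  (qlo G p <= x <-> forall y, x < y -> p <= G y).
Proof.
case/andP=> p0 p1; have [mG [_ [a [b [Ha Hb]]]]] := hG.
apply: inf_char.
- by exists b; rewrite /= Hb.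
- exists a => t /= pt; rewrite leNgt; apply/negP => /Ha Gt0; move: pt; rewrite Gt0; lra.
- move=> s t /= ps st; exact: le_trans ps (mG _ _ st).
Qed.

Lemma qhi_char p x : 0 <= p < 1 ->
  (qhi G p <= x <-> forall y, x < y -> p < G y).
Proof.
case/andP=> p0 p1; have [mG [_ [a [b [Ha Hb]]]]] := hG.
apply: inf_char.
- by exists b; rewrite /= Hb.
- exists a => t /= pt; rewrite leNgt; apply/negP => /Ha Gt0; move: pt; rewrite Gt0; lra.
- move=> s t /= ps st; exact: lt_le_trans ps (mG _ _ st).
Qed.

Lemma qlo_lb p : 0 < p <= 1 -> has_lbound [set t | p <= G t].
Proof.
case/andP=> p0 p1; have [mG [_ [a [b [Ha Hb]]]]] := hG.
exists a => t /= pt; rewrite leNgt; apply/negP => /Ha Gt0; move: pt; rewrite Gt0; lra.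
Qed.

Lemma qhi_lb p : 0 <= p < 1 -> has_lbound [set t | p < G t].
Proof.
case/andP=> p0 p1; have [mG [_ [a [b [Ha Hb]]]]] := hG.
exists a => t /= pt; rewrite leNgt; apply/negP => /Ha Gt0; move: pt; rewrite Gt0; lra.
Qed.

Lemma Td_stepge p : 0 < p <= 1 -> Td (stepge p) G = delta (qlo G p).
Proof.
move=> hp; apply/funext => x.
rewrite Td_inf //; [|exact: dist_stepge|by case: hG|exact: inM_bnd].
case: (lerP (qlo G p) x) => h.
  rewrite /delta h; apply: inf_img1 => y xy.
  by rewrite /stepge ifT //; apply: (proj1 (qlo_char x hp) h).
rewrite /delta ifF; last by apply/negbTE; rewrite -ltNge.
apply: inf_img0.
  by move=> y _; rewrite /stepge; case: ifP => _; rewrite ?lexx ?ler01.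
have [y xy ny] := inf_wit (qlo_lb hp) h.
by exists y => //; rewrite /stepge ifF //; apply/negbTE/negP.
Qed.

Lemma Td_stepgt p : 0 <= p < 1 -> Td (stepgt p) G = delta (qhi G p).
Proof.
move=> hp; apply/funext => x.
rewrite Td_inf //; [|exact: dist_stepgt|by case: hG|exact: inM_bnd].
case: (lerP (qhi G p) x) => h.
  rewrite /delta h; apply: inf_img1 => y xy.
  by rewrite /stepgt ifT //; apply: (proj1 (qhi_char x hp) h).
rewrite /delta ifF; last by apply/negbTE; rewrite -ltNge.
apply: inf_img0.
  by move=> y _; rewrite /stepgt; case: ifP => _; rewrite ?lexx ?ler01.
have [y xy ny] := inf_wit (qhi_lb hp) h.
by exists y => //; rewrite /stepgt ifF //; apply/negbTE/negP.
Qed.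

Lemma qlo_gal p x : 0 < p <= 1 -> (qlo G p <= x <-> p <= G x).
Proof.
move=> hp; rewrite qlo_char //; split.
  move=> H; have [_ [rc _]] := hG.
  apply: (cvgr_to_ge (rc x)); near=> y; apply: H.
  by near: y; apply: nbhs_right_gt.
by move=> px y xy; apply: le_trans px _; case: hG => mG _; apply: mG (ltW xy).
Unshelve. all: by end_near.
Qed.

End Quant.
End S2.
Section S3.
Variable R : realType.
Implicit Types (F G : R -> R) (x y p q : R).

Definition unif (a h : R) (y : R) : R := minr 1 (maxr 0 ((y - a) / h)).

Lemma unif_cont a h : continuous (unif a h).
Proof.
move=> x.
have c1 : {for x, continuous (fun y : R => (y - a) / h)}.
  apply: cvgM; last exact: cvg_cst.
  by apply: cvgB; [exact: cvg_id | exact: cvg_cst].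
have c2 : {for x, continuous ((fun _ : R => (0:R)) \max (fun y : R => (y - a) / h))}.
  by apply: continuous_max => //; exact: cvg_cst.
have c0 : {for x, continuous (fun _ : R => (1:R))} by exact: cvg_cst.
have c3 := continuous_min c0 c2.
exact: c3.
Qed.

Lemma inM_unif a h : 0 < h -> inM (unif a h).
Proof.
move=> h0; split.
  move=> s t st; apply: le_min2 => //; apply: le_max2 => //.
  by rewrite ler_pM2r ?invr_gt0 // lerD2r.
split; first by move=> x; apply: cvg_at_right_filter; apply: unif_cont.
exists a, (a + h); split=> t ht; rewrite /unif.
  have : (t - a) / h < 0 by rewrite pmulr_llt0 ?invr_gt0 // subr_lt0.
  move=> hn; rewrite (_ : maxr 0 _ = 0); last by apply/max_idPl; apply: ltW.
  by apply/min_idPr; rewrite ler01.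
have : 1 <= (t - a) / h by rewrite ler_pdivlMr // mul1r; lra.
move=> hp; rewrite (_ : maxr 0 _ = (t - a) / h); last by apply/max_idPr; apply: le_trans hp; rewrite ler01.
by apply/min_idPl.
Qed.

Lemma unif_le a h p y : 0 < h -> 0 < p <= 1 -> (p <= unif a h y) = (a + p * h <= y).
Proof.
move=> h0 /andP[p0 p1]; rewrite /unif le_min p1 /= le_max (leNgt p 0) p0 /=.
rewrite ler_pdivlMr //; apply/idP/idP => H; lra.
Qed.

Lemma unif_lt a h p y : 0 < h -> 0 <= p < 1 -> (p < unif a h y) = (a + p * h < y).
Proof.
move=> h0 /andP[p0 p1]; rewrite /unif lt_min p1 /= lt_max (ltNge p 0) p0 /=.
rewrite ltr_pdivlMr //; apply/idP/idP => H; lra.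
Qed.

Lemma qlo_unif a h p : 0 < h -> 0 < p <= 1 -> qlo (unif a h) p = a + p * h.
Proof.
move=> h0 hp; apply: inf_eq => y /=; rewrite unif_le //; first exact: ltW.
Qed.

Lemma qhi_unif a h p : 0 < h -> 0 <= p < 1 -> qhi (unif a h) p = a + p * h.
Proof.
move=> h0 hp; apply: inf_eq => y /=; rewrite unif_lt //; exact: ltW.
Qed.

Lemma qlo_mono G p p' : inM G -> 0 < p -> p <= p' -> p' <= 1 -> qlo G p <= qlo G p'.
Proof.
move=> hG p0 pp p1.
have hp : 0 < p <= 1 by rewrite p0 (le_trans pp p1).
have hp' : 0 < p' <= 1 by rewrite (lt_le_trans p0 pp) p1.
apply/(qlo_char hG _ hp) => y xy.
apply: le_trans pp _; exact: (proj1 (qlo_char hG _ hp') (lexx _)).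
Qed.

End S3.
Section Forward.
Variable R : realType.
Variable T : (R -> R) -> (R -> R).
Hypothesis HT : forall F, inM F -> inM (T F).
Hypothesis HC : forall d, distortion d -> forall F, inM F -> T (Td d F) = Td d (T F).

Definition uT (x : R) := qlo (T (delta x)) 1.

Lemma h01 : 0 < (1:R) <= 1. Proof. by rewrite ltr01 lexx. Qed.

Lemma Tdelta x : T (delta x) = delta (uT x).
Proof.
rewrite -{1}(Td_delta x (dist_stepge h01)).
rewrite (HC (dist_stepge h01) (inM_delta x)).
exact: (Td_stepge (HT (inM_delta x)) h01).
Qed.

Lemma Qlo F p : inM F -> 0 < p <= 1 -> qlo (T F) p = uT (qlo F p).
Proof.
move=> hF hp; apply: delta_inj.
rewrite -(Td_stepge (HT hF) hp) -(HC (dist_stepge hp) hF).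
by rewrite (Td_stepge hF hp) Tdelta.
Qed.

Lemma Qhi F p : inM F -> 0 <= p < 1 -> qhi (T F) p = uT (qhi F p).
Proof.
move=> hF hp; apply: delta_inj.
rewrite -(Td_stepgt (HT hF) hp) -(HC (dist_stepgt hp) hF).
by rewrite (Td_stepgt hF hp) Tdelta.
Qed.

Lemma uT_homo : {homo uT : x y / x <= y}.
Proof.
move=> x y; rewrite le_eqVlt => /orP[/eqP -> //|xy].
have h0 : 0 < 2 * (y - x) by lra.
set F := unif (2 * x - y) (2 * (y - x)).
have hF : inM F := inM_unif (2 * x - y) h0.
have hp12 : 0 < (1/2 : R) <= 1 by apply/andP; split; lra.
have e1 : uT x = qlo (T F) (1/2).
  rewrite (Qlo hF hp12) /F qlo_unif //; congr uT; lra.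
have e2 : uT y = qlo (T F) 1.
  rewrite (Qlo hF h01) /F qlo_unif //; last exact: h01. congr uT; lra.
rewrite e1 e2; apply: qlo_mono; first exact: HT.
all: lra.
Qed.

End Forward.
Section Forward2.
Variable R : realType.
Variable T : (R -> R) -> (R -> R).
Hypothesis HT : forall F, inM F -> inM (T F).
Hypothesis HC : forall d, distortion d -> forall F, inM F -> T (Td d F) = Td d (T F).

Let uT := uT T.
Let Qlo F p (hF : inM F) (hp : 0 < p <= 1) : qlo (T F) p = uT (qlo F p) := Qlo HT HC hF hp.
Let Qhi F p (hF : inM F) (hp : 0 <= p < 1) : qhi (T F) p = uT (qhi F p) := Qhi HT HC hF hp.
Let uT_homo : {homo uT : x y / x <= y} := uT_homo HT HC.

Lemma uT_right x0 e : 0 < e -> exists2 x1, x0 < x1 & uT x1 < uT x0 + e.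
Proof.
move=> e0; case: (pselect (exists2 x1, x0 < x1 & uT x1 < uT x0 + e)) => // nR.
exfalso.
have H : forall x1, x0 < x1 -> uT x0 + e <= uT x1.
  by move=> x1 h; rewrite leNgt; apply/negP => hh; apply: nR; exists x1.
have h2 : (0:R) < 2 by lra.
set F := unif (x0 - 1) 2.
have hF : inM F := inM_unif (x0 - 1) h2.
have hG := HT hF.
set c := uT x0 + e / 2.
have hp12 : 0 <= (1/2 : R) < 1 by apply/andP; split; lra.
have q12 : qhi (T F) (1/2) = uT x0.
  rewrite (Qhi hF hp12) /F qhi_unif //; congr uT; lra.
have Gc : 1/2 < T F c.
  have := proj1 (qhi_char hG (uT x0) hp12); rewrite q12 => /(_ (lexx _)); apply; rewrite /c; lra.
have := inM_bnd hG c => /andP[Gc0 Gc1].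
set p := (1/2 + T F c) / 2.
have hp : 0 < p <= 1 by apply/andP; split; rewrite /p; lra.
have := Qlo hF hp; rewrite /F qlo_unif // => E.
have : qlo (T F) p <= c.
  apply/(qlo_char hG c hp) => y cy.
  have [mG _] := hG.
  apply: le_trans (mG _ _ (ltW cy)); rewrite /p; lra.
rewrite E => le1.
have := H (x0 - 1 + p * 2); rewrite /p; move: le1; rewrite /p /c; lra.
Qed.

Lemma uT_left x0 e : 0 < e -> exists2 x2, x2 < x0 & uT x0 - e < uT x2.
Proof.
move=> e0; case: (pselect (exists2 x2, x2 < x0 & uT x0 - e < uT x2)) => // nL.
exfalso.
have H : forall x2, x2 < x0 -> uT x2 <= uT x0 - e.
  by move=> x2 h; rewrite leNgt; apply/negP => hh; apply: nL; exists x2.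
have h2 : (0:R) < 2 by lra.
set F := unif (x0 - 1) 2.
have hF : inM F := inM_unif (x0 - 1) h2.
have hG := HT hF.
set c := uT x0 - e / 2.
have hp12 : 0 < (1/2 : R) <= 1 by apply/andP; split; lra.
have q12 : qlo (T F) (1/2) = uT x0.
  rewrite (Qlo hF hp12) /F qlo_unif //; congr uT; lra.
have [y1 cy1 ny1] : exists2 y1, c < y1 & ~ (1/2 <= T F y1).
  apply: (inf_wit (qlo_lb hG hp12)); rewrite -/(qlo (T F) (1/2)) q12 /c; lra.
have Gy1 : T F y1 < 1/2 by rewrite ltNge; apply/negP.
have := inM_bnd hG y1 => /andP[G0 G1].
set p := (T F y1 + 1/2) / 2.
have hp : 0 <= p < 1 by apply/andP; split; rewrite /p; lra.
have := Qhi hF hp; rewrite /F qhi_unif // => E.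
have : qhi (T F) p <= c.
  rewrite E; apply: le_trans (H _ _) _; rewrite /p /c; lra.
move/(qhi_char hG c hp)/(_ y1 cy1); rewrite /p; lra.
Qed.

Lemma uT_cont : continuous uT.
Proof.
move=> x0; apply/cvgrPdist_lt => e e0.
have [x1 h1 u1] := uT_right x0 e0.
have [x2 h2 u2] := uT_left x0 e0.
apply/nbhs_ballP; exists (minr (x1 - x0) (x0 - x2)).
  by rewrite /= lt_min; apply/andP; split; lra.
move=> t /= Ht; move: Ht; rewrite lt_min => /andP[t1 t2].
have /andP[ta tb] : (x0 - (x0 - x2) < t < x0 + (x0 - x2)) by rewrite -ltr_distl distrC.
have /andP[tc td] : (x0 - (x1 - x0) < t < x0 + (x1 - x0)) by rewrite -ltr_distl distrC.
have m1 : uT t <= uT x1 by apply: uT_homo; lra.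
have m2 : uT x2 <= uT t by apply: uT_homo; lra.
rewrite ltr_distl; apply/andP; split; lra.
Qed.

Lemma T_eq F : inM F -> T F = Tu uT F.
Proof.
move=> hF; have hG := HT hF; apply/funext => x; rewrite /Tu /down_measure.
have G01 := inM_bnd hG x; have /andP[G0 G1] := G01.
have ub : has_ubound (F @` [set t | uT t <= x]).
  by exists 1 => _ [t _ <-]; have /andP[] := inM_bnd hF t.
have key : forall p, 0 < p <= 1 -> p <= T F x -> uT (qlo F p) <= x.
  by move=> p hp pG; rewrite -(Qlo hF hp); apply/(qlo_gal hG _ hp).
case: (pselect (exists t, uT t <= x)) => [[t0 St0]|nS].
  apply/le_anti/andP; split.
    have lsup : forall t, uT t <= x -> F t <= sup (F @` [set t | uT t <= x]).
      by move=> t ht; apply: (ub_le_sup ub); exists t.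
    case: (lerP (T F x) 0) => Gx.
      apply: le_trans Gx _; apply: le_trans (lsup _ St0).
      by have /andP[] := inM_bnd hF t0.
    have hp : 0 < T F x <= 1 by rewrite Gx G1.
    have := key _ hp (lexx _) => St.
    apply: le_trans (lsup _ St).
    by apply/(qlo_gal hF _ hp).
  apply: ge_sup; first by exists (F t0), t0.
  move=> _ [t St <-].
  case: (lerP (F t) 0) => Ft; first exact: le_trans Ft G0.
  have hp : 0 < F t <= 1 by rewrite Ft; have /andP[] := inM_bnd hF t.
  apply/(qlo_gal hG _ hp); rewrite (Qlo hF hp).
  apply: le_trans St; apply: uT_homo; exact/(qlo_gal hF _ hp).
have -> : [set t | uT t <= x] = set0.
  by apply/seteqP; split => t //= h; apply: nS; exists t.
rewrite image_set0 sup0; apply/le_anti; rewrite G0 andbT.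
rewrite leNgt; apply/negP => Gx.
have hp : 0 < T F x <= 1 by rewrite Gx G1.
by apply: nS; exists (qlo F (T F x)); apply: key.
Qed.

End Forward2.
Section Backward.
Variable R : realType.
Implicit Types (F G H : R -> R) (x y p q : R).

Lemma supF_ge F (S : set R) t : inM F -> S t -> F t <= sup (F @` S).
Proof.
move=> hF St; apply: (ub_le_sup _); last by exists t.
by exists 1 => _ [s _ <-]; have /andP[] := inM_bnd hF s.
Qed.

Lemma supF_le F (S : set R) c : 0 <= c -> (forall t, S t -> F t <= c) ->
  sup (F @` S) <= c.
Proof.
move=> c0 H; case: (pselect (exists t, S t)) => [[t0 St0]|nS].
  by apply: ge_sup; [exists (F t0), t0 | move=> _ [t St <-]; apply: H].
have -> : S = set0 by apply/seteqP; split => t //= h; apply: nS; exists t.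
by rewrite image_set0 sup0.
Qed.

Lemma supF_ge0 F (S : set R) : inM F -> 0 <= sup (F @` S).
Proof.
move=> hF; case: (pselect (exists t, S t)) => [[t0 St0]|nS].
  by apply: le_trans (supF_ge hF St0); have /andP[] := inM_bnd hF t0.
have -> : S = set0 by apply/seteqP; split => t //= h; apply: nS; exists t.
by rewrite image_set0 sup0.
Qed.

Lemma dF_homo d F : distortion d -> inM F -> {homo (fun y => d (F y)) : s t / s <= t}.
Proof.
move=> [_ [dm _]] hF s t st; apply: dm.
- by have /andP[] := inM_bnd hF s.
- by case: hF => mF _; apply: mF.
- by have /andP[] := inM_bnd hF t.
Qed.

Lemma dF_bnd d F y : distortion d -> inM F -> 0 <= d (F y) <= 1.
Proof. by move=> [d01 _] hF; apply: d01; apply: inM_bnd. Qed.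

Lemma TdM d F : distortion d -> inM F -> inM (Td d F).
Proof.
move=> hd hF.
have TdE : forall x, Td d F x = inf ((fun y => d (F y)) @` `]x, +oo[).
  by move=> x; apply: Td_inf => //; [case: hF | exact: inM_bnd].
set g := fun y => d (F y).
have lbg : forall x, has_lbound (g @` `]x, +oo[).
  by move=> x; exists 0 => _ [y _ <-]; have /andP[] := dF_bnd y hd hF.
have neg : forall x, g @` `]x, +oo[ !=set0.
  by move=> x; exists (g (x + 1)), (x + 1) => //; apply/itv_oo; lra.
have mH : {homo Td d F : s t / s <= t}.
  move=> s t st; rewrite !TdE; apply: lb_le_inf; first exact: neg.
  move=> _ [y /itv_oo ty <-]; apply: (ge_inf (lbg s)); exists y => //.
  by apply/itv_oo; apply: le_lt_trans ty.
have H0 : forall x, 0 <= Td d F x.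
  by move=> x; rewrite TdE; apply: lb_le_inf; [exact: neg | move=> _ [y _ <-]; have /andP[] := dF_bnd y hd hF].
split; first exact: mH.
split.
  move=> x.
  have h0 : (BRight x < BInfty R false)%O by [].
  have h1 : {in `]x, +oo[ &, {homo Td d F : s t / s <= t}} by move=> s t _ _; apply: mH.
  have h2 : has_lbound (Td d F @` `]x, +oo[) by exists 0 => _ [y _ <-].
  have E : inf (Td d F @` `]x, +oo[) = Td d F x.
    apply/le_anti/andP; split; last first.
      apply: lb_le_inf; first by exists (Td d F (x + 1)), (x + 1) => //; apply/itv_oo; lra.
      by move=> _ [y /itv_oo xy <-]; apply: mH; apply: ltW.
    rewrite leNgt; apply/negP => hlt.
    move: (hlt); rewrite {1}TdE => /(inf_lt (neg x)) [_ [y /itv_oo xy <-] gy].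
    have hx' : x < (x + y) / 2 by lra.
    have : Td d F ((x + y) / 2) <= g y.
      rewrite TdE; apply: (ge_inf (lbg _)); exists y => //; apply/itv_oo; lra.
    have : inf (Td d F @` `]x, +oo[) <= Td d F ((x + y) / 2).
      by apply: (ge_inf h2); exists ((x + y) / 2) => //; apply/itv_oo.
    move: gy; rewrite /g; lra.
  have := @nondecreasing_at_right_cvgr R (Td d F) x (BInfty R false) h0 h1 h2.
  by rewrite E.
have [mF [_ [a [b [Ha Hb]]]]] := hF.
have [_ [_ [d0 d1]]] := hd.
exists a, b; split=> x hx; rewrite TdE.
  apply: inf_img0; first by move=> y _; have /andP[] := dF_bnd y hd hF.
  by exists ((x + a) / 2); [lra | rewrite Ha ?d0 //; lra].
apply: inf_img1 => y xy; rewrite Hb ?d1 //; apply: le_trans hx (ltW xy).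
Qed.

End Backward.
Section Backward2.
Variable R : realType.
Variable u : R -> R.
Hypothesis hu : utility u.
Implicit Types (F G H : R -> R) (x y p q : R).

Let um : {homo u : s t / s <= t} := proj1 hu.

Lemma u_lt s t : u s < u t -> s < t.
Proof. by move=> h; rewrite ltNge; apply/negP => /um; rewrite leNgt h. Qed.

Lemma u_near s e : 0 < e -> exists2 del, 0 < del &
  forall t, `|s - t| < del -> `|u s - u t| < e.
Proof.
move=> e0; have hc : u x @[x --> s] --> u s by apply: (proj2 hu s).
move/cvgrPdist_lt : hc => /(_ e e0) /nbhs_ballP [del del0 Hb].
by exists del => // t ht; apply: Hb.
Qed.

Lemma Tu_bnd F x : inM F -> 0 <= Tu u F x <= 1.
Proof.
move=> hF; rewrite /Tu /down_measure supF_ge0 //=.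
by apply: supF_le => [|t _]; [exact: ler01 | have /andP[] := inM_bnd hF t].
Qed.

Lemma Tu_homo F : inM F -> {homo Tu u F : s t / s <= t}.
Proof.
move=> hF z z' zz; rewrite /Tu /down_measure.
apply: supF_le; first exact: supF_ge0.
move=> t ht; apply: supF_ge => //=; apply: le_trans ht zz.
Qed.

Lemma commute d F x : distortion d -> inM F ->
  Tu u (Td d F) x = Td d (Tu u F) x.
Proof.
move=> hd hF; have hH := TdM hd hF.
have [d01 [dm [d0 d1]]] := hd.
have [mF [_ [a [b [Ha Hb]]]]] := hF.
rewrite [RHS]Td_inf //; last 2 first.
- exact: Tu_homo.
- by move=> y; apply: Tu_bnd.
set K := Tu u F; set H := Td d F.
have K01 : forall z, 0 <= K z <= 1 by move=> z; apply: Tu_bnd.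
have dK0 : forall z, 0 <= d (K z) by move=> z; have /d01/andP[] := K01 z.
have lbK : has_lbound ((fun z => d (K z)) @` `]x, +oo[).
  by exists 0 => _ [z _ <-].
rewrite /Tu /down_measure.
set S := [set t | u t <= x].
case: (pselect (exists t, u t <= x)) => [[t1 St1]|nS]; last first.
  have -> : S = set0.
    by apply/seteqP; split => t //= h; apply: nS; exists t.
  rewrite image_set0 sup0; apply/esym/inf_img0; first by move=> z _.
  have xa : x < u (a - 1) by rewrite ltNge; apply/negP => h; apply: nS; exists (a - 1).
  exists ((x + u (a - 1)) / 2); first lra.
  have -> : K ((x + u (a - 1)) / 2) = 0; last exact: d0.
  apply/le_anti/andP; split; last by have /andP[] := K01 ((x + u (a - 1)) / 2).
  apply: supF_le => // t /= ht; rewrite Ha //.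
  have : u t < u (a - 1) by lra.
  by move/u_lt; lra.
case: (pselect (exists t, x < u t)) => [[t2 St2]|nT]; last first.
  have allS : forall t z, x <= z -> u t <= z.
    move=> t z xz; apply: le_trans xz; rewrite leNgt; apply/negP => h; apply: nT; exists t => //.
  have Hb1 : H b = 1.
    rewrite /H (Td_inf b hd mF (inM_bnd hF)).
    apply: inf_img1 => y hby; rewrite Hb ?d1 //; exact: ltW.
  have -> : sup (H @` S) = 1.
    apply/le_anti/andP; split.
      by apply: supF_le => [|t _]; [exact: ler01 | have /andP[] := inM_bnd hH t].
    by rewrite -{1}Hb1; apply: supF_ge => //=; apply: allS.
  apply/esym/inf_img1 => z xz.
  have -> : K z = 1; last exact: d1.
  apply/le_anti/andP; split; first by have /andP[] := K01 z.
  rewrite -(Hb b (lexx b)); apply: supF_ge => //=; apply: allS; exact: ltW.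
have ubS : forall t, S t -> t <= t2.
  move=> t; rewrite /S /= => ht; rewrite leNgt; apply/negP => h.
  have := um (ltW h); lra.
have hsup : has_sup S by split; [exists t1 | exists t2 => t /ubS].
set s := sup S.
have leS : forall t, S t -> t <= s by move=> t St; apply: (ub_le_sup hsup.2).
have Ss : S s.
  rewrite /S /=; rewrite leNgt; apply/negP => hxs.
  have e0 : 0 < u s - x by lra.
  have [del del0 Hd] := u_near s e0.
  have [t St st] := sup_adherent del0 hsup.
  have ts := leS _ St; rewrite -/s in st.
  have : `|s - t| < del by rewrite ger0_norm; lra.
  move/Hd; rewrite ltr_distl => /andP[h1 h2].
  move: St; rewrite /S /=; lra.
have -> : sup (H @` S) = H s.
  apply/le_anti/andP; split; last exact: supF_ge.
  apply: supF_le; first by have /andP[] := inM_bnd hH s.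
  by move=> t St; case: hH => mH _; apply: mH; apply: leS.
have HsE : H s = inf ((fun y => d (F y)) @` `]s, +oo[).
  by rewrite /H (Td_inf s hd mF (inM_bnd hF)).
have lbg : has_lbound ((fun y => d (F y)) @` `]s, +oo[).
  by exists 0 => _ [y _ <-]; have /andP[] := dF_bnd y hd hF.
apply/le_anti/andP; split.
  apply: lb_le_inf; first by exists (d (K (x + 1))), (x + 1) => //; apply/itv_oo; lra.
  move=> _ [z /itv_oo xz <-].
  have e0 : 0 < z - u s by move: Ss; rewrite /S /=; lra.
  have [del del0 Hd] := u_near s e0.
  have : `|s - (s + del / 2)| < del by rewrite opprD addrA subrr sub0r normrN ger0_norm; lra.
  move/Hd; rewrite ltr_distl => /andP[h1 h2].
  have uy : u (s + del / 2) <= z by lra.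
  have FK : F (s + del / 2) <= K z by apply: supF_ge.
  apply: le_trans (_ : d (F (s + del / 2)) <= _).
    by rewrite HsE; apply: (ge_inf lbg); exists (s + del / 2) => //; apply/itv_oo; lra.
  apply: dm => //; first by have /andP[] := inM_bnd hF (s + del / 2).
  by have /andP[] := K01 z.
rewrite HsE; apply: lb_le_inf; first by exists (d (F (s + 1))), (s + 1) => //; apply/itv_oo; lra.
move=> _ [y /itv_oo sy <-].
have xuy : x < u y.
  rewrite ltNge; apply/negP => h; have := leS y h; lra.
set z := (x + u y) / 2.
have KF : K z <= F y.
  apply: supF_le; first by have /andP[] := inM_bnd hF y.
  move=> t /= ht; apply: mF; apply: ltW; apply: u_lt; rewrite /z in ht; lra.
apply: le_trans (_ : d (K z) <= _).
  by apply: (ge_inf lbK); exists z => //; apply/itv_oo; rewrite /z; lra.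
apply: dm => //; first by have /andP[] := K01 z.
by have /andP[] := inM_bnd hF y.
Qed.

End Backward2.
Close Scope classical_set_scope.
Theorem theorem2 (R : realType) (T : (R -> R) -> (R -> R))
  (HT : forall F, inM F -> inM (T F)) :
  (forall d, distortion d -> forall F, inM F -> T (Td d F) = Td d (T F)) <->
  (exists u, utility u /\ forall F, inM F -> T F = Tu u F).
Proof.
split.
  move=> HC; exists (uT T); split; last by move=> F hF; exact: T_eq.
  by split; [exact: uT_homo | exact: uT_cont].
case=> u [hu HTu] d hd F hF.
rewrite (HTu _ (TdM hd hF)) (HTu _ hF); apply/funext => x.
exact: commute.
Qed.
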